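(* Let $\mathcal{G}$ be a $k$-uniform hypergraph. Then \[ i(\mathcal{G})\geq\frac{\alpha(\mathcal{G})+\beta(\mathcal{G})}{k}. \]
   Context: A $k$-uniform hypergraph $\mathcal{G}$ has vertex set $V(\mathcal{G})=[n]$ and edge set $E(\mathcal{G})$ of $k$-element subsets of $V(\mathcal{G})$. For $\mathbf{x}\in\mathbb{R}^n$, $\mathcal{L}_\mathcal{G}\mathbf{x}^k=\sum_{\{i_1,\ldots,i_k\}\in E(\mathcal{G})}\left(x_{i_1}^k+\cdots+x_{i_k}^k-k\,x_{i_1}\cdots x_{i_k}\right)$. The inverse Perron value of vertex $j$ is $\alpha_j(\mathcal{G})=\min\{\mathcal{L}_\mathcal{G}\mathbf{x}^k : \mathbf{x}\in\mathbb{R}^n_+,\ \sum_{i=1}^n x_i^k=1,\ x_j=0\}$. Let $\alpha(\mathcal{G})=\min_{j\in V(\mathcal{G})}\alpha_j(\mathcal{G})$ (the analytic connectivity) and $\beta(\mathcal{G})=\max_{j\in V(\mathcal{G})}\alpha_j(\mathcal{G})$. For $S\subseteq V(\mathcal{G})$ with $\overline{S}=V(\mathcal{G})\setminus S$, $E(S,\overline{S})$ is the set of edges containing vertices of both $S$ and $\overline{S}$. The isoperimetric number is $i(\mathcal{G})=\min\{|E(S,\overline{S})|/|S| : S\subseteq V(\mathcal{G}),\ 0<|S|\le |V(\mathcal{G})|/2\}$. *)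

(* Defs.v *)
From HB Require Import structures.
From mathcomp Require Import all_boot all_order all_algebra.
From mathcomp Require Import all_classical all_reals.
Set Implicit Arguments. Unset Strict Implicit. Unset Printing Implicit Defensive.
Import Order.TTheory GRing.Theory Num.Theory.
Local Open Scope ring_scope.
Local Open Scope classical_set_scope.

Definition uniform_hypergraph (n k : nat) (E : {set {set 'I_n}}) : Prop :=
  forall e, e \in E -> #|e| = k.

Definition lapl_form (R : realType) (n k : nat) (E : {set {set 'I_n}})
  (x : 'I_n -> R) : R :=
  \sum_(e in E) ((\sum_(i in e) x i ^+ k) - k%:R * \prod_(i in e) x i).

Definition feasible (R : realType) (n k : nat) (j : 'I_n) (x : 'I_n -> R) : Prop :=
  (forall i, 0 <= x i) /\ \sum_i x i ^+ k = 1 /\ x j = 0.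

(* inverse Perron value alpha_j(G): the minimum (= infimum, attained by compactness) *)
Definition alpha_j (R : realType) (n k : nat) (E : {set {set 'I_n}}) (j : 'I_n) : R :=
  inf [set @lapl_form R n k E x | x in [set x : 'I_n -> R | @feasible R n k j x]].

Definition alpha_conn (R : realType) (n k : nat) (E : {set {set 'I_n}}) : R :=
  inf (range (@alpha_j R n k E)).

Definition beta_conn (R : realType) (n k : nat) (E : {set {set 'I_n}}) : R :=
  sup (range (@alpha_j R n k E)).

Definition cut_edges (n : nat) (E : {set {set 'I_n}}) (S : {set 'I_n}) : {set {set 'I_n}} :=
  [set e in E | (e :&: S != finset.set0) && (e :&: ~: S != finset.set0)].

Definition isoperimetric (R : realType) (n : nat) (E : {set {set 'I_n}}) : R :=
  inf [set (#|cut_edges E S|%:R / #|S|%:R : R) |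
        S in [set S : {set 'I_n} | (0 < #|S|)%N /\ (2 * #|S| <= n)%N]].

(* Main.v *)
Require Import Defs.
From HB Require Import structures.
From mathcomp Require Import all_boot all_order all_algebra.
From mathcomp Require Import all_classical all_reals.
From mathcomp Require Import zify.
Import Order.TTheory GRing.Theory Num.Theory.
From mathcomp Require Import zify.
Local Open Scope ring_scope.
Lemma kroot (R : realType) (c : R) (k : nat) : 0 <= c -> (0 < k)%N ->
  exists r : R, 0 <= r /\ r ^+ k = c.
Proof.
move=> c0 k0.
have [||r /andP[r0 _] hr] := @poly_ivt R ('X^k - c%:P) 0 (1 + c).
- by rewrite addr_ge0.
- rewrite !hornerE expr0n -(prednK k0) /= sub0r oppr_le0 c0 /= subr_ge0.
  rewrite prednK //; apply: le_trans (ler_eXnr k0 _); first by rewrite lerDr.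
  by rewrite lerDl.
exists r; split => //; move: hr; rewrite /root !hornerE subr_eq0 => /eqP.
done.
Qed.

Lemma alpha_j_le (R : realType) (n k : nat) (E : {set {set 'I_n}})
  (T : {set 'I_n}) (j : 'I_n) :
  (0 < k)%N -> uniform_hypergraph k E -> (0 < #|T|)%N -> j \notin T ->
  @alpha_j R n k E j <=
  (\sum_(e in cut_edges E T) (#|e :&: T|%:R : R)) / #|T|%:R.
Proof.
move=> k0 unif T0 jT.
set B := (X in _ <= X).
have tpos : 0 < (#|T|%:R : R) by rewrite ltr0n.
have B0 : 0 <= B by rewrite divr_ge0 // ?sumr_ge0 // ltW.
rewrite /alpha_j; set A := (X in inf X).
have [hinf|hninf] := pselect (has_inf A); last by rewrite inf_out.
have tposV : 0 < (#|T|%:R : R)^-1 by rewrite invr_gt0.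
have [r [r0 hr]] := @kroot R (#|T|%:R^-1) k (ltW (tposV)) k0.
pose x := fun i : 'I_n => if i \in T then r else 0.
have xk : forall i, x i ^+ k = if i \in T then #|T|%:R^-1 else 0.
  by move=> i; rewrite /x; case: ifP => // _; rewrite expr0n -(prednK k0).
have x0 : forall i, 0 <= x i by move=> i; rewrite /x; case: ifP.
have feas : feasible k j x.
  split => //; split; last by rewrite /x (negbTE jT).
  rewrite (eq_bigr _ (fun i _ => xk i)) -big_mkcond /= sumr_const.
  by rewrite -[X in X = 1]mulr_natr mulVf // gt_eqF.
have hA : A (lapl_form k E x) by exists x.
apply: le_trans (ge_inf hinf.2 hA) _.
rewrite /lapl_form /B mulr_suml big_mkcond /=.

rewrite [X in _ <= X]big_mkcond /=; apply: ler_sum => e _.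
rewrite /cut_edges inE; case: (boolP (e \in E)) => //= eE.
have sE : \sum_(i in e) x i ^+ k = #|e :&: T|%:R / #|T|%:R.
  rewrite (eq_bigr _ (fun i _ => xk i)) -big_mkcondr /= sumr_const.
  rewrite -[LHS]mulr_natr mulrC; congr (_ * _); congr (_%:R).
  by apply: eq_card => i; rewrite inE.
have pE : 0 <= \prod_(i in e) x i by apply: prodr_ge0.
rewrite sE.
case: (boolP (e :&: T == finset.set0)) => [/eqP -> | eT] /=.
  rewrite cards0 mul0r sub0r oppr_le0 mulr_ge0 //; case: ifP => //.
case: (boolP (e :&: ~: T == finset.set0)) => [/eqP eCT | eCT] /=; last first.
  by rewrite gerBl mulr_ge0.
have esub : forall i, i \in e -> i \in T.
  move=> i ie; apply: contraT => iT.
  have : i \in e :&: ~: T by rewrite !inE ie iT.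
  by rewrite eCT inE.
have eTe : e :&: T = e by apply/setP => i; rewrite inE; case: (boolP (i \in e)) => // /esub.
rewrite (eq_bigr (fun=> r)) ?prodr_const; last by move=> i /esub; rewrite /x => ->.
by rewrite eTe unif // hr mulrC subrr.
Qed.

Theorem theorem3p3 (R : realType) (n k : nat) (E : {set {set 'I_n}}) :
  (2 <= n)%N -> (2 <= k)%N -> uniform_hypergraph k E ->
  @isoperimetric R n E >= (@alpha_conn R n k E + @beta_conn R n k E) / k%:R.
Proof.
move=> n2 k2 unif.
have k0 : (0 < k)%N by apply: leq_trans k2.
have kpos : 0 < (k%:R : R) by rewrite ltr0n.
set al := @alpha_j R n k E.
have hlb : has_lbound (range al).
  exists (- \sum_i `|al i|) => _ [j _ <-].
  rewrite lerNl; apply: le_trans (_ : - al j <= `|al j|) _.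
    by rewrite -normrN ler_norm.
  by rewrite (bigD1 j) //= lerDl sumr_ge0.
have hub : has_ubound (range al).
  exists (\sum_i `|al i|) => _ [j _ <-].
  apply: le_trans (ler_norm _) _.
  by rewrite (bigD1 j) //= lerDl sumr_ge0.
have i0 : 'I_n by exists 0%N; apply: leq_trans n2.
apply: lb_le_inf.
  exists (#|cut_edges E [set i0]|%:R / #|[set i0]|%:R).
  exists [set i0] => //; split; rewrite cards1 //.
move=> _ [S [S0 S2] <-].
set a := \sum_(e in cut_edges E S) (#|e :&: S|%:R : R).
set b := \sum_(e in cut_edges E (~: S)) (#|e :&: ~: S|%:R : R).
have cutC : cut_edges E (~: S) = cut_edges E S.
  apply/setP => e; rewrite /cut_edges !inE finset.setCK; congr (_ && _); exact: andbC.
have ab : a + b = k%:R * #|cut_edges E S|%:R.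
  rewrite /b cutC /a -big_split /= (eq_bigr (fun=> k%:R)); last first.
    move=> e; rewrite inE => /andP[eE _].
    by rewrite -natrD -finset.setDE cardsID unif.
  by rewrite sumr_const mulr_natr.
have a0 : 0 <= a by apply: sumr_ge0.
have b0 : 0 <= b by apply: sumr_ge0.
have SC : (#|S| <= #|~: S|)%N.
  by have := cardsC S; rewrite card_ord; lia.
have SC0 : (0 < #|~: S|)%N by apply: leq_trans SC.
have spos : 0 < (#|S|%:R : R) by rewrite ltr0n.
have hA : forall j, j \notin S -> al j <= a / #|S|%:R.
  by move=> j jS; apply: alpha_j_le.
have hB : forall j, j \in S -> al j <= b / #|S|%:R.
  move=> j jS; apply: le_trans (@alpha_j_le R n k E (~: S) j k0 unif SC0 _) _.
    by rewrite inE jS.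
  rewrite -/b ler_wpM2l // lef_pV2 ?posrE ?ltr0n // ler_nat //.
have [j0 j0S] : exists j, j \notin S.
  by move: SC0; rewrite card_gt0 => /finset.set0Pn[j]; rewrite inE; exists j.
have [j1 j1S] : exists j, j \in S.
  by move: S0; rewrite card_gt0 => /finset.set0Pn[j]; exists j.
have alA : @alpha_conn R n k E <= a / #|S|%:R.
  by apply: le_trans (hA _ j0S); apply: (ge_inf hlb); exists j0.
have alB : @alpha_conn R n k E <= b / #|S|%:R.
  by apply: le_trans (hB _ j1S); apply: (ge_inf hlb); exists j1.
have beM : forall M, (forall j, al j <= M) -> @beta_conn R n k E <= M.
  by move=> M hM; apply: ge_sup; [exists (al j0), j0 | move=> _ [j _ <-]].
have key : @alpha_conn R n k E + @beta_conn R n k E <= (a + b) / #|S|%:R.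
  rewrite mulrDl; case: (leP a b) => hab.
    apply: lerD => //; apply: beM => j; case: (boolP (j \in S)) => jS.
      exact: hB.
    by apply: le_trans (hA _ jS) _; rewrite ler_wpM2r // invr_ge0 ltW.
  rewrite addrC; apply: lerD => //; apply: beM => j; case: (boolP (j \in S)) => jS.
    by apply: le_trans (hB _ jS) _; rewrite ler_wpM2r ?invr_ge0 ?ltW.
  exact: hA.
rewrite ler_pdivrMr //; apply: le_trans key _.
by rewrite ab [X in _ <= X]mulrC mulrA.
Qed.
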